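(* For every integer $k\ge 2$, the generating function of the number of edges of the $k$-Pell graphs $\Pi_{n,k}$ is $$\sum_{n\geq 0}|E(\Pi_{n,k})|\,t^{n}=\frac{(k-1+t)\,t}{(1-kt-t^{2})^{2}}.$$
   Context: For an integer $k\ge 2$, a $k$-Pell string is a finite word over the alphabet $\{0,1,\ldots,k-1,kk\}$, i.e. a word over $\{0,1,\ldots,k\}$ in which every maximal run of the letter $k$ has even length. For $n\ge 0$, the $k$-Pell graph $\Pi_{n,k}$ has as vertices all $k$-Pell strings of length $n$ (so $\Pi_{0,k}$ is a single vertex, the empty word), and two vertices are adjacent if one is obtained from the other either by replacing a single letter $i$ by $i+1$ (or vice versa) for some $i\in\{0,1,\ldots,k-2\}$, or by replacing one factor $(k-1)(k-1)$ by $kk$ (or vice versa), in such a way that the resulting string is again a $k$-Pell string. *)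

(* Defs.v *)
From mathcomp Require Import all_boot all_order all_algebra.
Set Implicit Arguments. Unset Strict Implicit. Unset Printing Implicit Defensive.
Import GRing.Theory.

(* A k-Pell string: a word over {0,...,k} that parses as a word over the
   alphabet {0,1,...,k-1, kk} (equivalently every maximal run of k has even
   length).  Letters are assumed to be <= k (enforced by the vertex type). *)
Fixpoint pellb (k : nat) (s : seq nat) : bool :=
  match s with
  | [::] => true
  | x :: s' =>
      if x == k then
        match s' with
        | y :: s'' => (y == k) && pellb k s''
        | [::] => false
        end
      else pellb k s'
  end.

Section PellGraph.
Variables (k n : nat).

Definition word := n.-tuple 'I_k.+1.

Definition is_pell (u : word) : bool := pellb k (map val u).

Definition letter (u : word) (j : 'I_n) : nat := val (tnth u j).

Definition step_letter (u v : word) : bool :=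
  [exists j : 'I_n,
     [forall l : 'I_n, (l != j) ==> (letter u l == letter v l)]
     && (letter u j < k.-1) && (letter v j == (letter u j).+1)].

Definition step_factor (u v : word) : bool :=
  [exists j : 'I_n, [exists j' : 'I_n,
     (val j' == (val j).+1)
     && [forall l : 'I_n, ((l != j) && (l != j')) ==> (letter u l == letter v l)]
     && (letter u j == k.-1) && (letter u j' == k.-1)
     && (letter v j == k) && (letter v j' == k)]].

Definition pell_adj (u v : word) : bool :=
  [|| step_letter u v, step_letter v u, step_factor u v | step_factor v u].

Definition pell_edges : {set {set word}} :=
  [set e : {set word} | [exists u : word, [exists v : word,
     [&& e == [set u; v], is_pell u, is_pell v & pell_adj u v]]]].

End PellGraph.

(* Main.v *)
Require Import Defs.
From mathcomp Require Import all_boot all_order all_algebra.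
From mathcomp Require Import zify ring lra.
Import GRing.Theory.

Definition C3 (k : nat) (s t : seq nat) : bool :=
  match s, t with
  | a :: s', b :: t' => (a == k.-1) && (b == k) && (s' == t')
  | _, _ => false
  end.

Fixpoint Dir (k : nat) (s t : seq nat) : bool :=
  match s, t with
  | x :: s', y :: t' =>
     [|| (x == y) && Dir k s' t',
         (x < k.-1) && (y == x.+1) && (s' == t')
       | (x == k.-1) && (y == k) && C3 k s' t']
  | _, _ => false
  end.

Definition SLp (k : nat) (s t : seq nat) : Prop :=
  exists j, j < size s /\ (forall l, l != j -> nth 0 s l = nth 0 t l) /\
     nth 0 s j < k.-1 /\ nth 0 t j = (nth 0 s j).+1.

Definition SFp (k : nat) (s t : seq nat) : Prop :=
  exists j, j.+1 < size s /\ (forall l, l != j -> l != j.+1 -> nth 0 s l = nth 0 t l) /\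
     (nth 0 s j = k.-1 /\ nth 0 s j.+1 = k.-1 /\ nth 0 t j = k /\ nth 0 t j.+1 = k).

Lemma Dir_equiv k s t : size s = size t -> (SLp k s t \/ SFp k s t <-> Dir k s t).
Proof.
elim: s t => [|x s IH] [|y t] //=; first (split; [by case=> [][j][]|by []]).
move=> [] Hst; split.
- case=> [[j [Hj [Heq [Hlt Hnx]]]]|[j [Hj [Heq [H1 [H2 [H3 H4]]]]]]].
  + case: j Hj Heq Hlt Hnx => [|j] Hj Heq /= Hlt Hnx.
    * have -> : s = t.
        apply: (eq_from_nth (x0:=0) Hst) => i _; exact: (Heq i.+1).
      by rewrite Hlt Hnx !eqxx /= ?orbT.
    * have Hxy : x = y by exact: (Heq 0).
      have : Dir k s t.
        apply/(IH t Hst); left; exists j; (do 2 (split => //)).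
        by move=> l Hl; apply: (Heq l.+1).
      by move=> ->; rewrite Hxy eqxx.
  + case: j Hj Heq H1 H2 H3 H4 => [|j] Hj Heq /= H1 H2 H3 H4.
    * case: s t Hst Hj Heq H2 H4 IH => [|a s] [|b t] //= [] Hst _ Heq H2 H4 _.
      have -> : s = t.
        apply: (eq_from_nth (x0:=0) Hst) => i _; exact: (Heq i.+2).
      by rewrite H1 H3 H2 H4 !eqxx /= ?orbT ?andbF ?andbT.
    * have Hxy : x = y by exact: (Heq 0).
      have : Dir k s t.
        apply/(IH t Hst); right; exists j; (do 2 (split => //)).
        by move=> l Hl Hl'; apply: (Heq l.+1).
      by move=> ->; rewrite Hxy eqxx.
- case/or3P.
  + case/andP => /eqP <- /(IH t Hst) [[j [Hj [Heq [Hlt Hnx]]]]|[j [Hj [Heq [H1 [H2 [H3 H4]]]]]]].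
    * left; exists j.+1; (do 2 (split => //)).
      by case=> [|l] //= Hl; apply: Heq.
    * right; exists j.+1; (do 2 (split => //)).
      by case=> [|l] //= Hl Hl'; apply: Heq.
  + case/andP => /andP [Hlt /eqP ->] /eqP <-.
    left; exists 0; (do 2 (split => //)).
    by case.
  + case/andP => /andP [/eqP -> /eqP ->].
    case: s t Hst IH => [|a s] [|b t] //= [] Hst _ /andP [/andP [/eqP -> /eqP ->] /eqP <-].
    right; exists 0; (do 2 (split => //)).
    by case=> [|[|l]].
Qed.

Lemma Dir_weight k s t : 0 < k -> Dir k s t -> sumn s < sumn t.
Proof.
move=> k0; elim: s t => [|x s IH] [|y t] //=.
case/or3P.
- by case/andP => /eqP -> /IH; rewrite ltn_add2l.
- by case/andP => /andP [_ /eqP ->] /eqP ->; rewrite addSn.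
- case/andP => /andP [/eqP -> /eqP ->].
  case: s t {IH} => [|a s] [|b t] //= /andP [/andP [/eqP -> /eqP ->] /eqP ->].
  lia.
Qed.

Lemma nth_mv k n (u : word k n) (j : 'I_n) : nth 0 (map val u) j = letter u j.
Proof. by rewrite (nth_map (tnth u j)) ?size_tuple // -tnth_nth. Qed.

Lemma nth_mv_out k n (u : word k n) l : n <= l -> nth 0 (map val u) l = 0.
Proof. by move=> H; rewrite nth_default // size_map size_tuple. Qed.

Lemma size_mv k n (u : word k n) : size (map val u) = n.
Proof. by rewrite size_map size_tuple. Qed.

Lemma nth_eq_all k n (u v : word k n) (P : nat -> bool) :
  (forall l : 'I_n, P l -> letter u l = letter v l) ->
  forall l, P l -> nth 0 (map val u) l = nth 0 (map val v) l.
Proof.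
move=> H l Hl; case: (ltnP l n) => Hln.
- by rewrite -[l]/(val (Ordinal Hln)) !nth_mv; apply: H.
- by rewrite !nth_mv_out.
Qed.

Lemma SL_iff k n (u v : word k n) : step_letter u v <-> SLp k (map val u) (map val v).
Proof.
split.
- case/existsP => j /andP [/andP [/forallP H Hlt] /eqP Hv].
  exists j; split; first by rewrite size_mv.
  split; last by rewrite !nth_mv.
  move=> l Hl; apply: (@nth_eq_all k n u v (fun l => l != j)) => // l0 Hl0.
  by apply/eqP; move: (H l0); rewrite -(inj_eq val_inj) Hl0.
- case=> j [Hj [Heq [Hlt Hv]]]; rewrite size_mv in Hj.
  apply/existsP; exists (Ordinal Hj).
  move: Hlt Hv; rewrite -[j]/(val (Ordinal Hj)) !nth_mv => Hlt Hv.
  rewrite Hlt Hv eqxx !andbT; apply/forallP => l; apply/implyP => Hl.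
  by rewrite -!nth_mv Heq.
Qed.

Lemma SF_iff k n (u v : word k n) : step_factor u v <-> SFp k (map val u) (map val v).
Proof.
split.
- case/existsP => j /existsP [j' /andP [/andP [/andP [/andP [/andP [/eqP Hj' /forallP H] /eqP H1] /eqP H2] /eqP H3] /eqP H4]].
  exists j; split; first by rewrite size_mv -Hj' ltn_ord.
  split; last by rewrite -Hj' !nth_mv H1 H2 H3 H4.
  move=> l Hl Hl'; apply: (@nth_eq_all k n u v (fun l => (l != j) && (l != j.+1))); last by rewrite Hl.
  move=> l0 /andP [Hl0 Hl0']; apply/eqP; move: (H l0).
  by rewrite -(inj_eq val_inj) Hl0 -(inj_eq val_inj) Hj' Hl0'.
- case=> j [Hj [Heq [H1 [H2 [H3 H4]]]]]; rewrite size_mv in Hj.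
  have Hj0 : j < n by apply: ltnW.
  apply/existsP; exists (Ordinal Hj0); apply/existsP; exists (Ordinal Hj).
  move: H1 H2 H3 H4.
  rewrite -[j]/(val (Ordinal Hj0)) -[j.+1]/(val (Ordinal Hj)) !nth_mv => H1 H2 H3 H4.
  rewrite H1 H2 H3 H4 !eqxx !andbT /=; apply/forallP => l; apply/implyP => /andP [Hl Hl'].
  by rewrite -!nth_mv Heq.
Qed.

Lemma Dir_tuple k n (u v : word k n) :
  (step_letter u v || step_factor u v) = Dir k (map val u) (map val v).
Proof.
apply/idP/idP.
- case/orP => [/SL_iff|/SF_iff] H; apply/Dir_equiv; rewrite ?size_mv //; by [left|right].
- move/(Dir_equiv _ _ _ (etrans (size_mv _ _ u) (esym (size_mv _ _ v)))).
  by case=> [/SL_iff|/SF_iff] ->; rewrite ?orbT.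
Qed.

Definition T k n (g : seq nat -> seq nat -> nat) : nat :=
  \sum_(u : word k n) \sum_(v : word k n) g (map val u) (map val v).

Definition ec k n := T k n (fun s t => pellb k s && pellb k t && Dir k s t).

Lemma card_edges k n : 0 < k -> #|pell_edges k n| = ec k n.
Proof.
move=> k0.
set A := [set p : word k n * word k n |
           [&& is_pell p.1, is_pell p.2 & Dir k (map val p.1) (map val p.2)]].
set f := fun p : word k n * word k n => [set p.1; p.2].
have wt : forall u v : word k n, Dir k (map val u) (map val v) ->
     sumn (map val u) < sumn (map val v) by move=> u v; apply: Dir_weight.
have -> : pell_edges k n = f @: A.
  apply/setP => e; rewrite inE; apply/idP/idP.
  - case/existsP => u /existsP [v /and4P [/eqP -> Pu Pv Hadj]].
    move: Hadj; rewrite /pell_adj.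
    have [D|nD] := boolP (Dir k (map val u) (map val v)).
    + by move=> _; apply/imsetP; exists (u, v) => //; rewrite inE /= Pu Pv D.
    + have E1 : (step_letter u v || step_factor u v) = false by rewrite Dir_tuple (negbTE nD).
      move=> Hadj.
      have E2 : (step_letter v u || step_factor v u).
        by move: E1 Hadj; case: (step_letter u v); case: (step_letter v u);
        case: (step_factor u v); case: (step_factor v u).
      rewrite Dir_tuple in E2.
      apply/imsetP; exists (v, u); first by rewrite inE /= Pu Pv E2.
      by rewrite /f /= setUC.
  - case/imsetP => [[u v]]; rewrite inE /= => /and3P [Pu Pv D] ->.
    apply/existsP; exists u; apply/existsP; exists v.
    rewrite eqxx Pu Pv /= /pell_adj.
    by move: D; rewrite -Dir_tuple => /orP [->|->]; rewrite ?orbT.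
rewrite card_in_imset; last first.
  move=> [u v] [u' v']; rewrite !inE /= => /and3P [_ _ D] /and3P [_ _ D'] E.
  have Hu : u \in f (u', v') by rewrite -E /f /= !inE eqxx.
  have Hv : v \in f (u', v') by rewrite -E /f /= !inE eqxx orbT.
  rewrite /f /= in Hu Hv.
  move: (wt _ _ D) (wt _ _ D').
  case/set2P: Hu => ->; case/set2P: Hv => -> //; lia.
rewrite /ec /T pair_big /= -sum1_card big_mkcond /=.
apply: eq_bigr => [[u v]] _ /=.
rewrite inE /= /is_pell andbA; by case: (_ && _).
Qed.

Definition S k n (f : seq nat -> nat) : nat := \sum_(u : word k n) f (map val u).
Definition pc k n := S k n (fun s => pellb k s).

Lemma T_S k n g : T k n g = S k n (fun s => S k n (fun t => g s t)).
Proof. by []. Qed.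

Lemma sum_tuple_cons (X : finType) n (F : n.+1.-tuple X -> nat) :
  \sum_(u : n.+1.-tuple X) F u = \sum_(x : X) \sum_(u : n.-tuple X) F (cons_tuple x u).
Proof.
rewrite pair_big /=.
rewrite (reindex (fun p : X * n.-tuple X => cons_tuple p.1 p.2)) //=.
exists (fun u : n.+1.-tuple X => (thead u, behead_tuple u)).
- by move=> [x u] _ /=; congr pair; apply: val_inj.
- by move=> u _; rewrite [in RHS](tuple_eta u); apply: val_inj.
Qed.

Lemma S_cons k n f : S k n.+1 f = \sum_(x < k.+1) S k n (fun s => f (val x :: s)).
Proof. by rewrite /S sum_tuple_cons. Qed.

Lemma S0 k f : S k 0 f = f [::].
Proof.
rewrite /S (eq_bigr (fun _ => f [::])); last by move=> u _; rewrite tuple0.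
by rewrite sum_nat_const card_tuple expn0 mul1n.
Qed.

Lemma S_if k n (b : bool) F : S k n (fun s => if b then F s else 0) = if b then S k n F else 0.
Proof. by case: b => //; rewrite /S big1. Qed.

Lemma S_ext k n F G : (forall s, F s = G s) -> S k n F = S k n G.
Proof. by move=> H; apply: eq_bigr => u _; apply: H. Qed.

Lemma S_add k n F G : S k n (fun s => F s + G s) = S k n F + S k n G.
Proof. by rewrite /S big_split. Qed.

Lemma S_sum k n m F : S k n (fun s => \sum_(y < m) F s y) = \sum_(y < m) S k n (fun s => F s y).
Proof. by rewrite /S exchange_big. Qed.

Lemma T_cons k n g : T k n.+1 g =
  \sum_(x < k.+1) \sum_(y < k.+1) T k n (fun s t => g (val x :: s) (val y :: t)).
Proof.
rewrite T_S S_cons; apply: eq_bigr => x _.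
rewrite (@S_ext k n _ (fun s => \sum_(y < k.+1) S k n (fun t => g (val x :: s) (val y :: t)))); last first.
  by move=> s; rewrite S_cons.
by rewrite S_sum.
Qed.

Lemma T_diag k n f : T k n (fun s t => f s && (s == t)) = S k n f.
Proof.
rewrite T_S; apply: eq_bigr => u _.
rewrite /S (bigD1 u) //= eqxx andbT big1 ?addn0 //.
move=> v /negbTE Hv; rewrite (_ : (map val u == map val v) = false) ?andbF //.
apply/negbTE; apply: contraFN Hv => /eqP H; apply/eqP.
by apply: val_inj; apply: (inj_map val_inj).
Qed.

Lemma sum_pick m c (F : nat -> nat) :
  \sum_(y < m) (if val y == c then F (val y) else 0) = if c < m then F c else 0.
Proof.
elim: m => [|m IH]; first by rewrite big_ord0.
rewrite big_ord_recr /= IH.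
have [Hc|Hc] := ltnP c m; have [Hc'|Hc'] := ltnP c m.+1; case: eqP => E //;
  rewrite ?addn0 ?add0n ?E //; lia.
Qed.

Lemma sum_lt m j c : \sum_(x < m) (if val x < j then c else 0) = minn j m * c.
Proof.
elim: m => [|m IH]; first by rewrite big_ord0 minn0.
rewrite big_ord_recr /= IH.
case: (ltnP m j) => H.
- have -> : minn j m.+1 = m.+1 by apply/minn_idPr.
  by rewrite mulSn addnC.
- have -> : minn j m.+1 = j by apply/minn_idPl; apply: leqW.
  by rewrite addn0.
Qed.

Lemma sum_split k (F : nat -> nat) :
  \sum_(x < k.+1) F (val x) = \sum_(x < k) F (val x) + F k.
Proof. by rewrite big_ord_recr. Qed.

Lemma sum_const_lt k c : \sum_(x < k) c = k * c.
Proof. by rewrite sum_nat_const card_ord. Qed.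

Lemma pell_neq k x s : x != k -> pellb k (x :: s) = pellb k s.
Proof. by move=> H; rewrite /= (negbTE H). Qed.

Lemma pell_kk k y s : pellb k (k :: y :: s) = (y == k) && pellb k s.
Proof. by rewrite /= eqxx. Qed.

Lemma pell_k0 k : pellb k [:: k] = false.
Proof. by rewrite /= eqxx. Qed.

Local Arguments pellb : simpl never.

Lemma Dir_cons k x y s t : Dir k (x :: s) (y :: t) =
  [|| (x == y) && Dir k s t, (x < k.-1) && (y == x.+1) && (s == t)
    | (x == k.-1) && (y == k) && C3 k s t].
Proof. by []. Qed.

Lemma pw k x y s t : 0 < k ->
 (pellb k (x::s) && pellb k (y::t) && Dir k (x::s) (y::t) : nat)
  = (if y == x then (pellb k (x::s) && pellb k (x::t) && Dir k s t : nat) else 0)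
  + (if y == x.+1 then (if x < k.-1 then (pellb k s && (s == t) : nat) else 0) else 0)
  + (if x == k.-1 then (if y == k then (pellb k s && pellb k (k::t) && C3 k s t : nat) else 0) else 0).
Proof.
move=> k0; rewrite Dir_cons.
have Hk1 : k.-1 != k by rewrite neq_ltn prednK ?leqnn ?orbT // ltn_predL.
case: (eqVneq y x) => [->|nyx].
- rewrite /= (ltn_eqF (ltnSn x)) /= addn0.
  case: (eqVneq x k.-1) => [Ex|nx].
  + by rewrite Ex (negbTE Hk1) /= !andbF !orbF addn0.
  + by rewrite !andbF !orbF addn0.
- rewrite /= add0n.
  case: (eqVneq y x.+1) => [Ey|ny].
  + subst y; case: (ltnP x k.-1) => Hx /=.
    * have nx : x != k by rewrite neq_ltn (leq_trans Hx) ?leq_pred.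
      have nx1 : x.+1 != k by rewrite neq_ltn -[k]prednK //= ltnS Hx.
      have nx2 : (x == k.-1) = false by rewrite ltn_eqF.
      rewrite nx2 /= !pell_neq // ?andbF ?orbF ?addn0.
      by case: eqP => [->|_]; rewrite ?andbT ?andbb ?andbF.
    * rewrite add0n.
      case: (eqVneq x k.-1) => [Ex|nx]; last by rewrite ?andbF.
      rewrite Ex prednK // eqxx /= (@pell_neq k _ s Hk1).
      by case: (pellb k s); case: (pellb k (k :: t)).
  + rewrite add0n ?andbF /=.
    case: (eqVneq x k.-1) => [Ex|nx]; last by rewrite ?andbF.
    case: (eqVneq y k) => [Ey|nyk]; last by rewrite ?andbF.
    by subst; rewrite prednK // eqxx in ny.
Qed.


Lemma T_ext k n g h : (forall s t, g s t = h s t) -> T k n g = T k n h.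
Proof. by move=> H; rewrite !T_S; apply: S_ext => s; apply: S_ext => t. Qed.

Lemma T_add k n g h : T k n (fun s t => g s t + h s t) = T k n g + T k n h.
Proof.
rewrite !T_S -S_add; apply: S_ext => s; exact: S_add.
Qed.

Lemma T_if k n (b : bool) g : T k n (fun s t => if b then g s t else 0) = if b then T k n g else 0.
Proof. by case: b => //; rewrite T_S /S big1 // => u _; rewrite big1. Qed.

Lemma T0 k g : T k 0 g = g [::] [::].
Proof. by rewrite T_S !S0. Qed.

Lemma sum_pick_const m c a :
  \sum_(y < m) (if val y == c then a else 0) = if c < m then a else 0.
Proof. exact: (sum_pick m c (fun _ => a)). Qed.

Definition Ak k n := T k n (fun s t => pellb k (k::s) && pellb k (k::t) && Dir k s t).
Definition Cc k n := T k n (fun s t => pellb k s && pellb k (k::t) && C3 k s t).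

Lemma ec_step k n : 0 < k ->
  ec k n.+1 = k * ec k n + Ak k n + k.-1 * pc k n + Cc k n.
Proof.
move=> k0; rewrite /ec T_cons.
rewrite (eq_bigr (fun x : 'I_k.+1 =>
   (if val x < k.+1 then T k n (fun s t => pellb k (val x :: s) && pellb k (val x :: t) && Dir k s t) else 0)
   + (if (val x).+1 < k.+1 then (if val x < k.-1 then pc k n else 0) else 0)
   + (if val x == k.-1 then (if k < k.+1 then Cc k n else 0) else 0))); last first.
  move=> x _.
  rewrite (eq_bigr (fun y : 'I_k.+1 =>
     (if val y == val x then T k n (fun s t => pellb k (val x :: s) && pellb k (val x :: t) && Dir k s t) else 0)
   + (if val y == (val x).+1 then (if val x < k.-1 then pc k n else 0) else 0)
   + (if val x == k.-1 then (if val y == k then Cc k n else 0) else 0))); last first.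
    move=> y _; rewrite (@T_ext k n _ _ (fun s t => @pw k (val x) (val y) s t k0)) !T_add !T_if T_diag.
    by [].
  rewrite !big_split /= !sum_pick_const.
  by case: (val x == k.-1); rewrite ?sum_pick_const // big1.
have Hk : k.-1 < k.+1 by rewrite ltnS leq_pred.
rewrite !big_split /= ltnSn sum_pick_const Hk.
rewrite [X in _ + X + _ = _](eq_bigr (fun i : 'I_k.+1 => if val i < k.-1 then pc k n else 0)); last first.
  move=> i _; case: ltnP => // H; case: ltnP => // H2.
  by move: H H2; rewrite ltnS => /(leq_trans (leq_pred k)) ; rewrite leqNgt => /negbTE ->.
rewrite sum_lt (_ : minn k.-1 k.+1 = k.-1); last first.
  by apply/minn_idPl; rewrite (leq_trans (leq_pred k)) ?leqnSn.
rewrite [X in X + _ + _ = _](eq_bigr (fun i : 'I_k.+1 => T k n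
         (fun s t : seq nat => pellb k (val i :: s) && pellb k (val i :: t) && Dir k s t))); last first.
  by move=> i _; rewrite ltn_ord.
rewrite (sum_split k (fun i => T k n
         (fun s t : seq nat => pellb k (i :: s) && pellb k (i :: t) && Dir k s t))).
rewrite (eq_bigr (fun i : 'I_k => T k n (fun s t : seq nat => pellb k s && pellb k t && Dir k s t))); last first.
  move=> i _; apply: T_ext => s t.
  by rewrite !pell_neq // neq_ltn ltn_ord.
by rewrite sum_const_lt.
Qed.

Lemma ec0 k : ec k 0 = 0.
Proof. by rewrite /ec T0. Qed.

Lemma pc0 k : pc k 0 = 1.
Proof. by rewrite /pc S0. Qed.

Lemma Ak0 k : Ak k 0 = 0.
Proof. by rewrite /Ak T0 pell_k0. Qed.

Lemma Cc0 k : Cc k 0 = 0.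
Proof. by rewrite /Cc T0 /= andbF. Qed.

Lemma Ak_S k m : 0 < k -> Ak k m.+1 = ec k m.
Proof.
move=> k0; rewrite /Ak T_cons.
rewrite (eq_bigr (fun x : 'I_k.+1 => if val x == k then ec k m else 0)); last first.
  move=> x _.
  rewrite (eq_bigr (fun y : 'I_k.+1 => if val y == k then (if val x == k then ec k m else 0) else 0)).
    by rewrite sum_pick_const ltnSn.
  move=> y _; rewrite /ec -!T_if; apply: T_ext => s t.
  rewrite !pell_kk Dir_cons.
  case: (eqVneq (val y) k) => [Ey|ny]; last by case: (val x == k); rewrite /= ?andbF.
  case: (eqVneq (val x) k) => [Ex|nx]; last by [].
  rewrite Ex Ey eqxx /= ltnNge leq_pred /= (_ : (k == k.-1) = false); last first.
    by apply/negbTE; rewrite neq_ltn prednK ?leqnn ?orbT // ltn_predL.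
  by rewrite ?andbF ?orbF.
rewrite (_ : \sum_(i < k.+1) _ = if k < k.+1 then ec k m else 0); first by rewrite ltnSn.
exact: sum_pick_const.
Qed.

Lemma Cc_S k m : 0 < k -> Cc k m.+1 = pc k m.
Proof.
move=> k0; rewrite /Cc T_cons.
have Hk1 : k.-1 != k by rewrite neq_ltn prednK ?leqnn ?orbT // ltn_predL.
rewrite (eq_bigr (fun x : 'I_k.+1 => if val x == k.-1 then pc k m else 0)); last first.
  move=> x _.
  rewrite (eq_bigr (fun y : 'I_k.+1 => if val y == k then (if val x == k.-1 then pc k m else 0) else 0)).
    by rewrite sum_pick_const ltnSn.
  move=> y _; rewrite /pc -T_diag -!T_if; apply: T_ext => s t.
  rewrite pell_kk /C3.
  case: (eqVneq (val x) k.-1) => [->|nx]; last by case: (val y == k); rewrite /= ?andbF.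
  rewrite (@pell_neq k _ s Hk1) .
  case: (val y == k) => /=; last by rewrite !andbF.
  by case: eqP => [->|]; case: (pellb k t); case: (pellb k s).
rewrite (_ : \sum_(i < k.+1) _ = if k.-1 < k.+1 then pc k m else 0); first by rewrite ltnS leq_pred.
exact: sum_pick_const.
Qed.

Lemma pc_step k n : pc k n.+1 = k * pc k n + S k n (fun s => pellb k (k :: s)).
Proof.
rewrite /pc S_cons (sum_split k (fun x => S k n (fun s => pellb k (x :: s)))).
rewrite (eq_bigr (fun _ => pc k n)) ?sum_const_lt //.
move=> i _; apply: S_ext => s; by rewrite pell_neq // neq_ltn ltn_ord.
Qed.

Lemma Pk0 k : S k 0 (fun s => pellb k (k :: s)) = 0.
Proof. by rewrite S0 pell_k0. Qed.

Lemma Pk_S k m : S k m.+1 (fun s => pellb k (k :: s)) = pc k m.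
Proof.
rewrite S_cons (eq_bigr (fun x : 'I_k.+1 => if val x == k then pc k m else 0)).
  by rewrite sum_pick_const ltnSn.
move=> x _; rewrite /pc -S_if; apply: S_ext => s.
by rewrite pell_kk; case: (val x == k).
Qed.

Local Open Scope ring_scope.

Lemma q2E (K : int) : ((1 - K%:P * 'X - 'X^2) ^+ 2 : {poly int}) =
  1 + (- (2 * K))%:P * 'X + (K ^+ 2 - 2)%:P * 'X^2 + (2 * K)%:P * 'X^3 + 'X^4.
Proof. ring. Qed.

Lemma cq (K : int) i : ((1 - K%:P * 'X - 'X^2) ^+ 2 : {poly int})`_i =
  (i == 0)%N%:R - 2 * K * (i == 1)%N%:R + (K ^+ 2 - 2) * (i == 2)%N%:R
   + 2 * K * (i == 3)%N%:R + (i == 4)%N%:R.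
Proof.
rewrite q2E !coefD !coefCM coef1 coefX !coefXn; ring.
Qed.

Lemma sumS (G : nat -> int) N :
  \sum_(i < N.+1) G (val i) = G 0%N + \sum_(i < N) G (val i).+1.
Proof. by rewrite big_ord_recl; congr (_ + _); apply: eq_bigr => i _; rewrite lift0. Qed.

Lemma rhsE (K : int) n : (((K - 1)%:P + 'X) * 'X : {poly int})`_n =
  (K - 1) * (n == 1)%N%:R + (n == 2)%N%:R.
Proof.
rewrite coefMX coefD coefC coefX.
by case: n => [|[|[|n]]] /=; ring.
Qed.

Lemma sum1 (G : nat -> int) : \sum_(i < 1) G (val i) = G 0%N.
Proof. by rewrite (sumS G) big_ord0 addr0. Qed.
Lemma sum2 (G : nat -> int) : \sum_(i < 2) G (val i) = G 0%N + G 1%N.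
Proof. by rewrite (sumS G) (sum1 (fun j => G j.+1)). Qed.
Lemma sum3 (G : nat -> int) : \sum_(i < 3) G (val i) = G 0%N + G 1%N + G 2%N.
Proof. by rewrite (sumS G) (sum2 (fun j => G j.+1)) addrA. Qed.
Lemma sum4 (G : nat -> int) : \sum_(i < 4) G (val i) = G 0%N + G 1%N + G 2%N + G 3%N.
Proof. by rewrite (sumS G) (sum3 (fun j => G j.+1)) !addrA. Qed.
Lemma sum5 (G : nat -> int) m : \sum_(i < m.+4.+1) G (val i) =
  G 0%N + G 1%N + G 2%N + G 3%N + G 4%N + \sum_(i < m) G ((val i).+4.+1).
Proof.
rewrite (sumS G) (sumS (fun j => G j.+1)) (sumS (fun j => G j.+2)).
rewrite (sumS (fun j => G j.+3)) (sumS (fun j => G j.+4)) !addrA //.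
Qed.

Theorem proposition3p1 (k : nat) : (2 <= k)%N ->
  forall n : nat,
    \sum_(i < n.+1)
       ((1 - (k%:R)%:P * 'X - 'X^2) ^+ 2 : {poly int})`_i
         * (#|pell_edges k (n - i)|)%:R
    = (((k%:R - 1)%:P + 'X) * 'X : {poly int})`_n.
Proof.
move=> k2 n; have k0 : (0 < k)%N by apply: leq_trans k2.
set K : int := k%:R.
pose e i : int := (ec k i)%:R.
pose p i : int := (pc k i)%:R.
have e0 : e 0%N = 0 by rewrite /e ec0.
have p0 : p 0%N = 1 by rewrite /p pc0.
have km1 : (k.-1)%:R = K - 1 :> int by rewrite -subn1 natrB.
have p1 : p 1%N = K by rewrite /p pc_step Pk0 pc0 muln1 addn0.
have e1 : e 1%N = K - 1.
  by rewrite /e ec_step // ec0 Ak0 Cc0 pc0 muln0 !addn0 add0n muln1.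
have pr : forall m, p m.+2 = K * p m.+1 + p m.
  by move=> m; rewrite /p pc_step Pk_S natrD natrM.
have er : forall m, e m.+2 = K * e m.+1 + e m + (K - 1) * p m.+1 + p m.
  by move=> m; rewrite /e ec_step // Ak_S // Cc_S // !natrD !natrM km1.
pose cc j := ((1 - K%:P * 'X - 'X^2) ^+ 2 : {poly int})`_j.
rewrite (eq_bigr (fun i : 'I_n.+1 => cc (val i) * e (n - val i)%N)); last first.
  by move=> i _; rewrite /cc /e card_edges.
rewrite rhsE.
case: n => [|[|[|[|m]]]].
- rewrite (sum1 (fun j => cc j * e (0 - j)%N)) /cc cq /= e0; ring.
- rewrite (sum2 (fun j => cc j * e (1 - j)%N)) /cc !cq /= e0 e1; ring.
- rewrite (sum3 (fun j => cc j * e (2 - j)%N)) /cc !cq /= e0 e1 er e1 e0 p1 p0; ring.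
- rewrite (sum4 (fun j => cc j * e (3 - j)%N)) /cc !cq /= e0 !er e1 e0 !pr p1 p0; ring.
- rewrite (sum5 (fun j => cc j * e (m.+4 - j)%N)) big1; last first.
    by move=> i _; rewrite /cc cq /=; ring.
  rewrite /cc !cq /= !subSS !subn0 !er !pr; ring.
Qed.
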